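(* Let $\beta>1$ and $M\ge1$, and let $$g(\mathbf{p})=\log2-\frac{\beta|\mathbf{p}|^2}{2}+\big\langle\log\cosh(\beta\,\mathbf{s}\cdot\mathbf{p})\big\rangle_{\mathbf{s}},\qquad \mathbf{p}\in\mathbb{R}^M.$$ Then the global maximum of $g$ (equivalently the minimum of the free energy $-g/\beta$) is attained exactly at the two symmetric points $\mathbf{p}=\pm m_0(\beta)\mathbf{1}$.
   Context: $m_0(\beta)$ is the largest nonnegative solution of $m=\tanh(\beta m)$ (positive for $\beta>1$). $\langle\cdot\rangle_{\mathbf{s}}$ is expectation over $\mathbf{s}\in\{-1,1\}^M$ with i.i.d. entries of mean $m_0(\beta)$. *)

(* Defs.v *)
From HB Require Import structures.
From mathcomp Require Import all_boot all_order all_algebra.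
From mathcomp Require Import all_classical all_reals all_analysis.
Set Implicit Arguments. Unset Strict Implicit. Unset Printing Implicit Defensive.
Import Order.TTheory GRing.Theory Num.Theory.
Local Open Scope ring_scope.

Section Defs.
Variable R : realType.

Definition coshR (x : R) : R := (expR x + expR (- x)) / 2.
Definition tanhR (x : R) : R := (expR x - expR (- x)) / (expR x + expR (- x)).

Definition is_m0 (beta m : R) : Prop :=
  [/\ 0 <= m, m = tanhR (beta * m)
    & forall m', 0 <= m' -> m' = tanhR (beta * m') -> m' <= m].

Definition spin (b : bool) : R := if b then 1 else -1.

(* probability of the configuration s in {-1,1}^M with i.i.d. entries of mean m:
   P(s_i = sigma) = (1 + m sigma)/2 *)
Definition spin_weight (M : nat) (m : R) (s : {ffun 'I_M -> bool}) : R :=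
  \prod_(i < M) ((1 + m * spin (s i)) / 2).

Definition spin_avg (M : nat) (m : R) (f : {ffun 'I_M -> bool} -> R) : R :=
  \sum_(s : {ffun 'I_M -> bool}) spin_weight m s * f s.

Definition dot_spin (M : nat) (s : {ffun 'I_M -> bool}) (p : 'rV[R]_M) : R :=
  \sum_(i < M) spin (s i) * p ord0 i.

Definition sqnorm (M : nat) (p : 'rV[R]_M) : R := \sum_(i < M) p ord0 i ^+ 2.

Definition g_fun (M : nat) (beta m : R) (p : 'rV[R]_M) : R :=
  ln 2 - beta * sqnorm p / 2
  + spin_avg m (fun s => ln (coshR (beta * dot_spin s p))).

End Defs.

(* Main.v *)
Require Import Defs.
From HB Require Import structures.
From mathcomp Require Import all_boot all_order all_algebra.
From mathcomp Require Import all_classical all_reals all_analysis.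
From mathcomp Require Import ring lra.
Import Order.TTheory GRing.Theory Num.Theory.
Local Open Scope ring_scope.

Section An.
Context {R : realType}.
Implicit Types x y : R.

Definition EE (y : R) : R := expR y + expR (- y).

Lemma EE_gt0 y : 0 < EE y.
Proof. by rewrite /EE addr_gt0 ?expR_gt0. Qed.

Lemma is_derive_expRN y : is_derive y 1 (fun z : R => expR (- z)) (- expR (- y)).
Proof.
have H := @is_derive1_comp R expR (fun z => -z) y _ _ (is_derive_expR _) (is_deriveNid y 1).
by rewrite mulrN1 in H.
Qed.

Lemma is_derive_EE y : is_derive y 1 EE (expR y - expR (- y)).
Proof.
have H := is_deriveD (is_derive_expR y) (is_derive_expRN y).
exact: H.
Qed.
End An.

Section An2.
Context {R : realType}.
Implicit Types x y : R.

Lemma alg_tanh (a b : R) : a * b = 1 -> a + b != 0 ->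
  4 / (a + b) ^+ 2 = (a - b) * (- ((a + b) ^+ 2)^-1 * (a - b)) + (a + b)^-1 * (a + b).
Proof. move=> e1 E0.
have -> : (4:R) = 4 * (a * b) by rewrite e1 mulr1.
field. done. Qed.

Lemma is_derive_tanh y : is_derive y 1 (@tanhR R) (4 / EE y ^+ 2).
Proof.
have HS : is_derive y 1 (fun z : R => expR z - expR (- z)) (EE y).
  have H := is_deriveB (is_derive_expR y) (is_derive_expRN y).
  by rewrite opprK in H.
have HV := @is_deriveV R EE y _ 1 (lt0r_neq0 (EE_gt0 y)) (is_derive_EE y).
have HM := is_deriveM HS HV.
have -> : @tanhR R = (fun z : R => expR z - expR (- z)) * (fun y => (EE y)^-1).
  by apply/funext => z.
have -> : 4 / EE y ^+ 2 = ((expR y - expR (- y)) *: (- EE y ^- 2 *: (expR y - expR (- y))) +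
       (EE y)^-1 *: EE y).
  have e1 := expRxMexpNx_1 y.
  have E0 := lt0r_neq0 (EE_gt0 y).
  exact (alg_tanh _ _ e1 E0).
exact HM.
Qed.
End An2.

Section An3.
Context {R : realType}.
Implicit Types x y : R.

Lemma mvt {f df : R -> R} {a b : R} : a < b -> (forall x, is_derive x 1 f (df x)) ->
  exists c, [/\ a < c, c < b & f b - f a = df c * (b - a)].
Proof.
move=> ab D.
have Dv : forall x, derivable f x 1 by move=> x; case: (D x).
have [c cab e] := MVT ab (fun x _ => D x)
   (derivable_within_continuous (fun x _ => Dv x)).
by move: cab; rewrite in_itv /= => /andP[c1 c2]; exists c.
Qed.

Lemma EE_incr {a b : R} : 0 <= a -> a < b -> EE a < EE b.
Proof.
move=> a0 ab.
rewrite /EE !expRN.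
have A1 : 1 <= expR a by rewrite -expR0 ler_expR.
have AB : expR a < expR b by rewrite ltr_expR.
set A := expR a in A1 AB *; set B := expR b in AB *.
have A0 : 0 < A by apply: lt_le_trans A1.
have B0 : 0 < B by apply: lt_trans AB.
rewrite -subr_gt0.
have -> : B + B^-1 - (A + A^-1) = (B - A) * (A * B - 1) / (A * B).
  by field; rewrite !gt_eqF.
apply: divr_gt0; last exact: mulr_gt0.
apply: mulr_gt0; first by rewrite subr_gt0.
rewrite subr_gt0; nra.
Qed.

Lemma EE_even y : EE (- y) = EE y.
Proof. by rewrite /EE opprK addrC. Qed.

Lemma tanhRE y : tanhR y = (expR y - expR (- y)) / EE y.
Proof. by []. Qed.

Lemma coshRE y : coshR y = EE y / 2.
Proof. by []. Qed.

Lemma coshR_gt0 y : 0 < coshR y.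
Proof. by rewrite coshRE divr_gt0 // EE_gt0. Qed.

Lemma coshR_even y : coshR (- y) = coshR y.
Proof. by rewrite !coshRE EE_even. Qed.

Lemma tanhR_lt1 y : tanhR y < 1.
Proof.
rewrite tanhRE ltr_pdivrMr ?EE_gt0 // mul1r /EE.
have := expR_gt0 (- y); lra.
Qed.

Lemma tanhR0 : tanhR 0 = 0 :> R.
Proof. by rewrite tanhRE oppr0 subrr mul0r. Qed.

Lemma is_derive_lncosh y : is_derive y 1 (fun z : R => ln (coshR z)) (tanhR y).
Proof.
have Hc : is_derive y 1 (@coshR R) (2^-1 * (expR y - expR (- y))).
  have H := is_deriveZ (2^-1) (is_derive_EE y).
  have -> : @coshR R = 2^-1 \*: EE by apply/funext => z; rewrite /coshR /= mulrC.
  exact H.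
have Hl := is_derive1_ln (coshR_gt0 y).
have H := is_derive1_comp Hl Hc.
have -> : tanhR y = (coshR y)^-1 * (2^-1 * (expR y - expR (- y))).
  rewrite tanhRE coshRE /EE; field.
  by have := EE_gt0 y; rewrite /EE => /gt_eqF ->.
exact H.
Qed.

End An3.

Section An4.
Context {R : realType}.
Variable beta : R.
Hypothesis b1 : 1 < beta.
Implicit Types x y : R.

Let b0 : 0 < beta. Proof. exact: lt_trans b1. Qed.

Definition vv y := tanhR y - beta^-1 * y.
Definition dvv y := 4 / EE y ^+ 2 - beta^-1.

Lemma is_derive_vv y : is_derive y 1 vv (dvv y).
Proof.
have H1 := is_derive_tanh y.
have H2 := is_deriveZ (beta^-1) (is_derive_id y (1:R)).
have H := is_deriveB H1 H2.
rewrite /GRing.scale /= mulr1 in H.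
exact H.
Qed.

Lemma dvv_decr {a b : R} : 0 <= a -> a < b -> dvv b < dvv a.
Proof.
move=> a0 ab; rewrite /dvv ltrD2r.
have Ea := EE_gt0 a; have Eb := EE_gt0 b.
have Eab := EE_incr a0 ab.
rewrite ltr_pM2l // ltf_pV2 ?posrE ?exprn_gt0 //.
by rewrite ltrXn2r // ltW.
Qed.

Lemma vv0 : vv 0 = 0.
Proof. by rewrite /vv tanhR0 mulr0 subrr. Qed.

Variable h : R.
Hypothesis h0 : 0 < h.
Hypothesis vh : vv h = 0.

Lemma vv_pos y : 0 < y -> y < h -> 0 < vv y.
Proof.
move=> y0 yh.
have [c1 [c10 c1y e1]] := mvt y0 is_derive_vv.
have [c2 [c2y c2h e2]] := mvt yh is_derive_vv.
have d := dvv_decr (ltW c10) (lt_trans c1y c2y).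
rewrite vv0 !subr0 in e1; rewrite vh sub0r in e2.
rewrite ltNge; apply/negP => vle.
have dc1 : dvv c1 <= 0.
  by move: vle; rewrite e1 pmulr_lle0.
have dc2 : dvv c2 < 0 by apply: lt_le_trans d dc1.
have : dvv c2 * (h - y) < 0 by rewrite pmulr_llt0 // subr_gt0.
rewrite -e2; lra.
Qed.

Lemma vv_neg y : h < y -> vv y < 0.
Proof.
move=> hy.
have [c1 [c10 c1h e1]] := mvt h0 is_derive_vv.
have [c2 [c2h c2y e2]] := mvt hy is_derive_vv.
have d := dvv_decr (ltW c10) (lt_trans c1h c2h).
rewrite vv0 vh !subr0 in e1; rewrite vh subr0 in e2.
have dc1 : dvv c1 = 0.
  by move/esym/eqP: e1; rewrite mulf_eq0 (gt_eqF h0) orbF => /eqP.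
rewrite e2 pmulr_llt0 ?subr_gt0 //.
by rewrite -dc1.
Qed.

Definition Phi y := ln (coshR y) - (2 * beta)^-1 * (y * y).

Lemma is_derive_Phi y : is_derive y 1 Phi (vv y).
Proof.
have H1 := is_derive_lncosh y.
have H2 := is_deriveZ ((2 * beta)^-1) (is_deriveM (is_derive_id y (1:R)) (is_derive_id y (1:R))).
have H := is_deriveB H1 H2.
have -> : vv y = tanhR y - (2 * beta)^-1 * (y * 1 + y * 1).
  rewrite /vv !mulr1. field. by rewrite gt_eqF.
exact H.
Qed.

Lemma Phi_even y : Phi (- y) = Phi y.
Proof. by rewrite /Phi coshR_even mulrNN. Qed.

Lemma Phi_lt_pos y : 0 <= y -> y != h -> Phi y < Phi h.
Proof.
move=> y0 yh.
case: (ltgtP y h) yh => // [yh|hy] _.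
  have [c [yc ch e]] := mvt yh is_derive_Phi.
  have vc := vv_pos c (le_lt_trans y0 yc) ch.
  rewrite -subr_gt0 e; apply: mulr_gt0 => //; by rewrite subr_gt0.
have [c [hc cy e]] := mvt hy is_derive_Phi.
have vc := vv_neg c hc.
rewrite -subr_lt0 e pmulr_llt0 // subr_gt0 //.
Qed.

Lemma Phi_lt y : y != h -> y != - h -> Phi y < Phi h.
Proof.
move=> yh yNh.
case: (lerP 0 y) => y0; first exact: Phi_lt_pos.
rewrite -Phi_even; apply: Phi_lt_pos; first by rewrite oppr_ge0 ltW.
by rewrite eqr_oppLR.
Qed.

Lemma Phi_le y : Phi y <= Phi h.
Proof.
case: (eqVneq y h) => [->//|yh].
case: (eqVneq y (- h)) => [->|yNh]; first by rewrite Phi_even.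
exact/ltW/Phi_lt.
Qed.

End An4.

Section Exist.
Context {R : realType}.
Variable beta : R.
Hypothesis b1 : 1 < beta.

Lemma exists_root : exists z : R, 0 < z /\ vv beta z = 0.
Proof.
have b0 : 0 < beta by apply: lt_trans b1.
have lb0 : 0 < ln beta by apply: ln_gt0.
set y1 := ln beta / 4.
have y10 : 0 < y1 by rewrite divr_gt0.
have vy1 : 0 < vv beta y1.
  have [c [c0 cy e]] := mvt y10 (is_derive_vv beta).
  rewrite vv0 subr0 in e; rewrite e subr0; apply: mulr_gt0 => //.
  rewrite /dvv subr_gt0.
  have Ec : EE c < 2 * expR y1.
    rewrite /EE.
    have : expR (- c) < expR c by rewrite ltr_expR; lra.
    have : expR c < expR y1 by rewrite ltr_expR.
    lra.
  have E0 := EE_gt0 c.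
  have Ec2 : EE c ^+ 2 < 4 * beta.
    have -> : 4 * beta = (2 * expR y1) ^+ 2 * (beta / expR (ln beta / 2)).
      rewrite exprMn -expRM_natl.
      have -> : 2%:R * y1 = ln beta / 2 by rewrite /y1; field.
      field.
      by rewrite gt_eqF // expR_gt0.
    apply: (lt_le_trans (y := (2 * expR y1) ^+ 2)).
      by rewrite ltrXn2r // ltW.
    rewrite ler_peMr ?exprn_ge0 ?mulr_ge0 ?expR_ge0 //.
    rewrite ler_pdivlMr ?expR_gt0 // mul1r.
    by rewrite -[X in _ <= X]lnK ?posrE // ler_expR; lra.
  rewrite ltr_pdivlMr ?exprn_gt0 //.
  rewrite -(ltr_pM2r b0) mulrAC mulVf ?gt_eqF // mul1r; lra.
have vb : vv beta beta < 0.
  by rewrite /vv mulVf ?gt_eqF // subr_lt0 tanhR_lt1.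
have y1b : y1 <= beta.
  have := ln_sublinear b0; rewrite /y1; lra.
have dv : forall x, derivable (vv beta) x 1 by move=> x; case: (is_derive_vv beta x).
have mm : Num.min (vv beta y1) (vv beta beta) <= 0 <= Num.max (vv beta y1) (vv beta beta).
  by rewrite ge_min le_max (ltW vb) (ltW vy1) orbT.
have [z zI vz] := IVT y1b (derivable_within_continuous (fun x _ => dv x)) mm.
exists z; split => //.
by move: zI; rewrite in_itv /= => /andP[+ _]; apply: lt_le_trans.
Qed.
End Exist.

Section Comb.
Context {R : realType}.
Variable M : nat.
Local Notation T := {ffun 'I_M -> bool}.

Definition flip (s : T) : T := [ffun i => ~~ s i].
Lemma flipK : involutive flip.
Proof. by move=> s; apply/ffunP => i; rewrite !ffunE negbK. Qed.
Lemma flip_inj : injective flip.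
Proof. exact: inv_inj flipK. Qed.

Definition sig (s : T) : R := \sum_(i < M) spin R (s i).

Lemma spin_neg b : spin R (~~ b) = - spin R b.
Proof. by case: b; rewrite /spin ?opprK. Qed.

Lemma sig_flip s : sig (flip s) = - sig s.
Proof. by rewrite /sig -sumrN; apply: eq_bigr => i _; rewrite ffunE spin_neg. Qed.

Lemma dot_flip s (p : 'rV[R]_M) : dot_spin (flip s) p = - dot_spin s p.
Proof. by rewrite /dot_spin -sumrN; apply: eq_bigr => i _; rewrite ffunE spin_neg mulNr. Qed.

Lemma sum_flip (F : T -> R) : \sum_s F (flip s) = \sum_s F s.
Proof. by rewrite [RHS](reindex_inj flip_inj). Qed.

Lemma weight_expr (h : R) s :
  spin_weight (tanhR h) s = expR (h * sig s) / EE h ^+ M.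
Proof.
rewrite /spin_weight.
have E0 := EE_gt0 h.
have each : forall b, (1 + tanhR h * spin R b) / 2 = expR (h * spin R b) * (EE h)^-1.
  move=> b; case: b; rewrite /spin tanhRE ?mulr1 ?mulrN1 -?expRN; move: E0; rewrite /EE => E0;
  field; by rewrite gt_eqF.
rewrite (eq_bigr _ (fun i _ => each (s i))) big_split /= prodr_const card_ord.
by rewrite /sig mulr_sumr expR_sum exprVn.
Qed.

Lemma sum_prod_spin' (f : 'I_M -> bool -> R) :
  \prod_(i < M) (f i true + f i false) = \sum_(s : T) \prod_(i < M) f i (s i).
Proof.
transitivity (\prod_(i < M) \sum_(b : bool) f i b).
  by apply: eq_bigr => i _; rewrite big_bool.
by rewrite bigA_distr_bigA.
Qed.
End Comb.
Arguments flip {M}.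

Section Comb2.
Context {R : realType}.
Variable M : nat.
Local Notation T := {ffun 'I_M -> bool}.

Lemma sum_weight (m : R) : \sum_(s : T) spin_weight m s = 1.
Proof.
rewrite /spin_weight -(sum_prod_spin' M (fun i b => (1 + m * spin R b) / 2)).
by rewrite /spin big1 // => i _; field; done.
Qed.

Lemma sum_cosh (beta : R) (p : 'rV[R]_M) :
  \sum_(s : T) coshR (beta * dot_spin s p) = \prod_(i < M) EE (beta * p ord0 i).
Proof.
have H : \sum_(s : T) expR (beta * dot_spin s p) = \prod_(i < M) EE (beta * p ord0 i).
  transitivity (\prod_(i < M) (expR (beta * (spin R true * p ord0 i)) + expR (beta * (spin R false * p ord0 i)))); last first.
    by apply: eq_bigr => i _; rewrite /EE /spin mul1r mulN1r mulrN.
  rewrite (sum_prod_spin' M (fun i b => expR (beta * (spin R b * p ord0 i)))).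
  by apply: eq_bigr => s _; rewrite /dot_spin mulr_sumr expR_sum.
have H' : \sum_(s : T) expR (- (beta * dot_spin s p)) = \prod_(i < M) EE (beta * p ord0 i).
  rewrite -H -(sum_flip M (fun s => expR (beta * dot_spin s p))).
  by apply: eq_bigr => s _; rewrite dot_flip mulrN.
rewrite /coshR -mulr_suml big_split /= H H'; set P := \prod_(i < M) _; field; done.
Qed.

Definition qq (m : R) (s : T) := (spin_weight m s + spin_weight m (flip s)) / 2.

Lemma avg_sym (m : R) (f : T -> R) : (forall s, f (flip s) = f s) ->
  spin_avg m f = \sum_(s : T) qq m s * f s.
Proof.
move=> fs.
have H : \sum_(s : T) spin_weight m (flip s) * f s = spin_avg m f.
  rewrite /spin_avg -(sum_flip M (fun s => spin_weight m s * f s)).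
  by apply: eq_bigr => s _; rewrite fs.
rewrite /qq.
transitivity ((spin_avg m f + \sum_(s : T) spin_weight m (flip s) * f s) / 2).
  by rewrite H; field; done.
rewrite /spin_avg -big_split /= mulr_suml; apply: eq_bigr => s _; field; done.
Qed.

Lemma qq_expr (h : R) s : qq (tanhR h) s = coshR (h * sig M s) / EE h ^+ M.
Proof.
rewrite /qq !weight_expr sig_flip /coshR /EE mulrN.
have := EE_gt0 h; rewrite /EE => E0.
field. by rewrite expf_neq0 // gt_eqF.
Qed.

Lemma sum_qq (m : R) : \sum_(s : T) qq m s = 1.
Proof.
rewrite /qq -mulr_suml big_split /= (sum_flip M (fun s => spin_weight m s)) sum_weight.
field; done.
Qed.

End Comb2.

Section Jensen.
Context {R : realType}.

Lemma ln_le_sub1 (x : R) : 0 < x -> ln x <= x - 1.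
Proof.
move=> x0; have := expR_ge1Dx (ln x); rewrite lnK ?posrE //; lra.
Qed.

Lemma ln_eq_sub1 (x : R) : 0 < x -> ln x = x - 1 -> x = 1.
Proof.
move=> x0 e; apply/eqP; apply/negPn/negP => x1.
have l0 : ln x != 0 by rewrite ln_eq0.
have := expR_gt1Dx l0; rewrite lnK ?posrE //; lra.
Qed.

Lemma jensen (T : finType) (q c : T -> R) :
  (forall s, 0 < q s) -> \sum_s q s = 1 -> (forall s, 0 < c s) ->
  \sum_s q s * ln (c s) - \sum_s q s * ln (q s) <= ln (\sum_s c s) /\
  (\sum_s q s * ln (c s) - \sum_s q s * ln (q s) = ln (\sum_s c s) ->
     forall s, c s = q s * \sum_s c s).
Proof.
move=> q0 q1 c0.
set A := \sum_s c s.
have A0 : 0 < A.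
  case: (pickP (@predT T)) => [s0 _|e].
    rewrite /A (bigD1 s0) //=.
    have : 0 <= \sum_(s | s != s0) c s by apply: sumr_ge0 => s _; apply/ltW.
    have := c0 s0; lra.
  by move: q1; rewrite big_pred0 // => /esym/eqP; rewrite oner_eq0.
set x := fun s => c s / (q s * A).
have x0 s : 0 < x s by rewrite /x divr_gt0 // mulr_gt0.
set g := fun s => q s * ((x s - 1) - ln (x s)).
have g0 s : 0 <= g s.
  rewrite /g; apply: mulr_ge0; first exact/ltW.
  by rewrite subr_ge0 ln_le_sub1.
have gE s : g s = c s / A - q s - q s * ln (c s) + q s * ln (q s) + q s * ln A.
  rewrite /g /x ln_div ?posrE ?mulr_gt0 // lnM ?posrE //.
  have := q0 s; have := A0 => ? ?.
  field; by rewrite !gt_eqF.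
have sg : \sum_s g s = ln A - (\sum_s q s * ln (c s) - \sum_s q s * ln (q s)).
  rewrite (eq_bigr _ (fun s _ => gE s)) !big_split /= !sumrN.
  rewrite -!mulr_suml q1 -/A divff ?gt_eqF //; ring.
split.
  rewrite -subr_ge0 -sg; exact: sumr_ge0.
move=> eD s.
have : \sum_s g s = 0 by rewrite sg eD subrr.
move/eqP; rewrite psumr_eq0; last by move=> i _; exact: g0.
move=> /allP /(_ s (mem_index_enum s)) /implyP /(_ isT) /eqP.
rewrite /g => /eqP; rewrite mulf_eq0 gt_eqF //= subr_eq0 => /eqP e.
have := ln_eq_sub1 _ (x0 s) (esym e).
rewrite /x; set Q := q s; set C := c s => e1; have Q0 : 0 < Q := q0 s.
have : C = 1 * (Q * A) by rewrite -e1 divfK // mulf_neq0 ?gt_eqF.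
by rewrite mul1r.
Qed.
End Jensen.

Section Main1.
Context {R : realType}.
Variables (beta m0 : R).
Hypothesis b1 : 1 < beta.
Hypothesis hm0 : is_m0 beta m0.

Let b0 : 0 < beta. Proof. exact: lt_trans b1. Qed.

Lemma m0_pos : 0 < m0.
Proof.
have [z [z0 vz]] := exists_root beta b1.
case: hm0 => _ _ hmax.
have x0 : 0 < z / beta by rewrite divr_gt0.
apply: (lt_le_trans x0); apply: hmax; first exact: ltW.
have -> : beta * (z / beta) = z by rewrite mulrC divfK ?gt_eqF.
by move/eqP: vz; rewrite /vv subr_eq0 => /eqP ->; rewrite mulrC.
Qed.

Definition hh := beta * m0.
Lemma hh0 : 0 < hh.
Proof. by rewrite /hh mulr_gt0 // m0_pos. Qed.
Lemma tanh_hh : tanhR hh = m0.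
Proof. by case: hm0 => _ <-. Qed.
Lemma vhh : vv beta hh = 0.
Proof. by rewrite /vv tanh_hh /hh mulrA mulVf ?gt_eqF // mul1r subrr. Qed.

Definition Fx (x : R) := ln (coshR (beta * x)) - beta * x ^+ 2 / 2.

Lemma FxE x : Fx x = Phi beta (beta * x).
Proof. rewrite /Fx /Phi; congr (_ - _); field; by rewrite gt_eqF. Qed.

Lemma Fx_le x : Fx x <= Fx m0.
Proof. by rewrite !FxE; apply: (@Phi_le R beta b1 hh hh0 vhh). Qed.

Lemma Fx_eq x : Fx x = Fx m0 -> x = m0 \/ x = - m0.
Proof.
rewrite !FxE => e.
case: (eqVneq (beta * x) hh) => [ex|n1].
  by left; apply: (mulfI (lt0r_neq0 b0)).
case: (eqVneq (beta * x) (- hh)) => [ex|n2].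
  by right; apply: (mulfI (lt0r_neq0 b0)); rewrite ex /hh mulrN.
have := @Phi_lt R beta b1 hh hh0 vhh _ n1 n2; rewrite -/hh e; lra.
Qed.

Lemma Fx_even x : Fx (- x) = Fx x.
Proof. by rewrite /Fx mulrN coshR_even sqrrN. Qed.

Lemma coshR_inj (a b : R) : 0 <= a -> 0 <= b -> coshR a = coshR b -> a = b.
Proof.
move=> a0 b0' e.
case: (ltgtP a b) => // ab.
  by have := EE_incr a0 ab; have := coshRE a; have := coshRE b; lra.
by have := EE_incr b0' ab; have := coshRE a; have := coshRE b; lra.
Qed.

Lemma coshR_abs (y : R) : coshR `|y| = coshR y.
Proof. by case: (ler0P y) => y0; rewrite ?ler0_norm ?gtr0_norm ?coshR_even. Qed.

Lemma ln_prod (I : finType) (f : I -> R) : (forall i, 0 < f i) ->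
  ln (\prod_i f i) = \sum_i ln (f i).
Proof.
move=> f0.
suff [] : 0 < \prod_i f i /\ ln (\prod_i f i) = \sum_i ln (f i) by [].
apply: (big_rec2 (fun a b => 0 < a /\ ln a = b)) => [|i a b _ [a0 e]].
  by rewrite ln1.
by split; [rewrite mulr_gt0 | rewrite lnM ?posrE // e].
Qed.

Variable M : nat.
Local Notation T := {ffun 'I_M -> bool}.
Implicit Types p : 'rV[R]_M.

Definition WW := EE hh ^+ M.
Lemma WW_gt0 : 0 < WW.
Proof. by rewrite /WW exprn_gt0 // EE_gt0. Qed.

Definition qM (s : T) := qq M m0 s.
Lemma qME s : qM s = coshR (hh * sig M s) / WW.
Proof. by have := qq_expr M hh s; rewrite tanh_hh. Qed.
Lemma qM_gt0 s : 0 < qM s.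
Proof. by rewrite qME divr_gt0 ?coshR_gt0 ?WW_gt0. Qed.
Lemma sum_qM : \sum_(s : T) qM s = 1.
Proof. exact: (sum_qq M m0). Qed.

Definition cp (p : 'rV[R]_M) (s : T) := coshR (beta * dot_spin s p).
Definition KK := \sum_(s : T) qM s * ln (qM s).
Definition gap p := ln (\sum_(s : T) cp p s) - (\sum_(s : T) qM s * ln (cp p s) - KK).

Lemma sumF p : \sum_(i < M) (ln 2 + Fx (p ord0 i)) =
  ln (\sum_(s : T) cp p s) - beta * sqnorm p / 2.
Proof.
rewrite /cp sum_cosh ln_prod; last by move=> i; exact: EE_gt0.
rewrite /sqnorm mulr_sumr mulr_suml -sumrB; apply: eq_bigr => i _.
have -> : EE (beta * p ord0 i) = 2 * coshR (beta * p ord0 i) by rewrite coshRE; field.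
rewrite lnM ?posrE ?coshR_gt0 // /Fx; ring.
Qed.

Lemma gE p : g_fun beta m0 p = ln 2 + KK + \sum_(i < M) (ln 2 + Fx (p ord0 i)) - gap p.
Proof.
rewrite /g_fun (avg_sym M m0 (fun s => ln (coshR (beta * dot_spin s p)))); last first.
  by move=> s; rewrite dot_flip mulrN coshR_even.
rewrite sumF /gap /KK /cp -/(qM _).
rewrite (eq_bigr (fun s => qM s * ln (coshR (beta * dot_spin s p)))) //.
ring.
Qed.

Lemma gap_ge0 p : 0 <= gap p.
Proof.
have [H _] := jensen _ _ _ qM_gt0 sum_qM (fun s => coshR_gt0 (beta * dot_spin s p)).
by rewrite /gap subr_ge0 /KK.
Qed.

Lemma gap_eq0 p : gap p = 0 -> forall s, cp p s = qM s * \sum_(s : T) cp p s.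
Proof.
have [_ H] := jensen _ _ _ qM_gt0 sum_qM (fun s => coshR_gt0 (beta * dot_spin s p)).
move=> g0; apply: H; move/eqP: g0; rewrite /gap subr_eq0 => /eqP.
by rewrite /KK => ->.
Qed.

Lemma dot_const (c : R) s : dot_spin s (const_mx c : 'rV[R]_M) = sig M s * c.
Proof. by rewrite /dot_spin /sig mulr_suml; apply: eq_bigr => i _; rewrite mxE. Qed.

Lemma gap_const c : c = m0 \/ c = - m0 -> gap (const_mx c) = 0.
Proof.
move=> hc.
have cE s : cp (const_mx c) s = WW * qM s.
  rewrite qME mulrC divfK ?gt_eqF ?WW_gt0 // /cp dot_const.
  case: hc => ->; first by congr coshR; rewrite /hh; ring.
  by rewrite -coshR_even; congr coshR; rewrite /hh; ring.
rewrite /gap (eq_bigr _ (fun s _ => cE s)) -mulr_sumr sum_qM mulr1.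
rewrite (eq_bigr (fun s => qM s * ln WW + qM s * ln (qM s))); last first.
  by move=> s _; rewrite cE lnM ?posrE ?WW_gt0 ?qM_gt0 // mulrDr.
rewrite big_split /= -mulr_suml sum_qM /KK; ring.
Qed.

Definition Top := ln 2 + KK + \sum_(i < M) (ln 2 + Fx m0).

Lemma g_le p : g_fun beta m0 p <= Top.
Proof.
rewrite gE /Top.
have := gap_ge0 p.
have : \sum_(i < M) (ln 2 + Fx (p ord0 i)) <= \sum_(i < M) (ln 2 + Fx m0).
  by apply: ler_sum => i _; rewrite lerD2l Fx_le.
lra.
Qed.

Lemma g_const c : c = m0 \/ c = - m0 -> g_fun beta m0 (const_mx c : 'rV[R]_M) = Top.
Proof.
move=> hc; rewrite gE gap_const // subr0 /Top.
congr (_ + _); apply: eq_bigr => i _; rewrite mxE.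
by case: hc => ->; rewrite ?Fx_even.
Qed.

Lemma sum_eq0_nonneg (F : 'I_M -> R) : (forall i, 0 <= F i) -> \sum_i F i = 0 -> forall i, F i = 0.
Proof.
move=> F0 /eqP; rewrite psumr_eq0; last by move=> i _; exact: F0.
by move=> /allP H i; apply/eqP; have := H i (mem_index_enum i); rewrite implyTb.
Qed.

Lemma main_sec p : (forall q : 'rV[R]_M, g_fun beta m0 q <= g_fun beta m0 p) <->
  (p = const_mx m0 \/ p = const_mx (- m0)).
Proof.
have m0p := m0_pos.
split; last first.
  move=> hp q; apply: (le_trans (g_le q)).
  by case: hp => ->; rewrite g_const //; [left|right].
move=> hmax.
have gT : g_fun beta m0 p = Top.
  apply/le_anti; rewrite g_le /=.
  by rewrite -(g_const m0); [exact: hmax | left].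
have hS : \sum_(i < M) (ln 2 + Fx (p ord0 i)) <= \sum_(i < M) (ln 2 + Fx m0).
  by apply: ler_sum => i _; rewrite lerD2l Fx_le.
have hg := gap_ge0 p.
have gE' := gE p.
have gap0 : gap p = 0.
  move: gT gE' hS hg; rewrite /Top; lra.
have hS' : \sum_(i < M) ((ln 2 + Fx m0) - (ln 2 + Fx (p ord0 i))) = 0.
  rewrite sumrB; move: gT gE' hS hg; rewrite /Top; lra.
have pi : forall i, p ord0 i = m0 \/ p ord0 i = - m0.
  move=> i; apply: Fx_eq.
  have Fnn : forall j, 0 <= (fun i => (ln 2 + Fx m0) - (ln 2 + Fx (p ord0 i))) j.
    by move=> j; rewrite subr_ge0 lerD2l Fx_le.
  have := sum_eq0_nonneg (fun i => (ln 2 + Fx m0) - (ln 2 + Fx (p ord0 i))) Fnn hS' i; rewrite /=; lra.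
have hc := gap_eq0 p gap0.
set A := \sum_(s : T) cp p s in hc.
have A0 : 0 < A.
  have := hc [ffun _ => true]; have := qM_gt0 [ffun _ => true].
  have := coshR_gt0 (beta * dot_spin [ffun _ => true] p); rewrite /cp => c0 q0 e.
  by move: c0; rewrite e pmulr_rgt0.
set Sp := \sum_(i < M) p ord0 i.
have d1 : dot_spin [ffun _ : 'I_M => true] p = Sp.
  by rewrite /dot_spin; apply: eq_bigr => i _; rewrite ffunE /spin mul1r.
have s1 : sig M [ffun _ : 'I_M => true] = (M%:R : R).
  rewrite /sig (eq_bigr (fun _ => (1:R))); last by move=> i _; rewrite ffunE.
  by rewrite sumr_const card_ord.
set ss := [ffun i => p ord0 i == m0].
have nm : (- m0 == m0) = false by apply/negbTE; rewrite eq_sym -subr_eq0 opprK; apply/lt0r_neq0; lra.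
have d2 : dot_spin ss p = M%:R * m0.
  rewrite /dot_spin (eq_bigr (fun _ => m0)).
    by rewrite sumr_const card_ord mulr_natl.
  by move=> i _; rewrite ffunE; case: (pi i) => ->; rewrite ?eqxx ?nm /spin ?mul1r ?mulN1r ?opprK.
have s2 : hh * sig M ss = beta * Sp.
  rewrite /hh /sig -mulrA mulr_sumr; congr (_ * _); apply: eq_bigr => i _.
  by rewrite ffunE; case: (pi i) => ->; rewrite ?eqxx ?nm /spin ?mulr1 ?mulrN1.
have e1 := hc [ffun _ => true]; have e2 := hc ss.
rewrite /cp qME d1 s1 in e1; rewrite /cp qME d2 s2 in e2.
set a := coshR (beta * Sp) in e1 e2.
set b := coshR (beta * (M%:R * m0)) in e2.
have hb : coshR (hh * M%:R) = b by rewrite /b /hh; congr coshR; ring.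
rewrite hb in e1.
set k := A / WW.
have k0 : 0 < k by rewrite divr_gt0 // WW_gt0.
have e1' : a = b * k by rewrite e1 /k; field; rewrite gt_eqF ?WW_gt0.
have e2' : b = a * k by rewrite e2 /k; field; rewrite gt_eqF ?WW_gt0.
have ab : a = b.
  have : (a - b) * (1 + k) = 0 by rewrite mulrDr mulr1 mulrBl -e1' -e2'; ring.
  move/eqP; rewrite mulf_eq0 => /orP[|]; first by rewrite subr_eq0 => /eqP.
  move/eqP => e; have : 0 < 1 + k by lra. by rewrite e ltxx.
have hab : `|beta * Sp| = beta * (M%:R * m0).
  apply: coshR_inj => //; first by rewrite !mulr_ge0 // ?ltW.
  by rewrite coshR_abs -/a ab.
have hSp : Sp = M%:R * m0 \/ Sp = - (M%:R * m0).
  move: hab; case: (ler0P (beta * Sp)) => h0.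
    move=> e; right; apply: (mulfI (lt0r_neq0 b0)); rewrite mulrN -e; ring.
  move=> e; left; exact: (mulfI (lt0r_neq0 b0)).
case: hSp => eS.
  left; apply/matrixP => i j; rewrite ord1 mxE.
  have H := sum_eq0_nonneg (fun i => m0 - p ord0 i) _ _ j.
  apply/eqP; rewrite eq_sym -subr_eq0; apply/eqP; apply: H.
    by move=> l; case: (pi l) => ->; lra.
  by rewrite sumrB sumr_const card_ord -/Sp eS mulr_natl subrr.
right; apply/matrixP => i j; rewrite ord1 mxE.
have H := sum_eq0_nonneg (fun i => p ord0 i + m0) _ _ j.
apply/eqP; rewrite -subr_eq0 opprK; apply/eqP; apply: H.
  by move=> l; case: (pi l) => ->; lra.
by rewrite big_split /= sumr_const card_ord -/Sp eS mulr_natl addNr.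
Qed.

End Main1.

Theorem mainTheorem5 (R : realType) (beta : R) (M : nat) (m0 : R)
  (hbeta : 1 < beta) (hM : (1 <= M)%N) (hm0 : is_m0 beta m0) :
  forall p : 'rV[R]_M,
    (forall q : 'rV[R]_M, g_fun beta m0 q <= g_fun beta m0 p) <->
    (p = const_mx m0 \/ p = const_mx (- m0)).
Proof.
move=> p; exact: (@main_sec R beta m0 hbeta hm0 M p).
Qed.
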